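(* Suppose $D$ is finite. Then the dimension of $\mathcal{A}(D)/\mathcal{V}(D)$ equals the $\mathbb{F}_2$-rank of the adjacency matrix of the collinearity graph of the Fischer space $\Pi(D)$.
   Context: Let $D$ be a class of $3$-transpositions generating a group $G$ (a conjugacy class of involutions with $o(de)\in\{1,2,3\}$ for $d,e\in D$). $\Pi(D)$ has point set $D$ and lines the triples $\{d,e,d^e\}$ with $d,e$ non-commuting; its collinearity graph joins distinct collinear (i.e., non-commuting) points. $\mathcal{A}(D)$ is the $\mathbb{F}_2$-space with basis $D$ and bilinear product $d*e=d+e+f$ if $\{d,e,f\}$ is a line, $0$ otherwise; the form $\langle d,e\rangle$ is $1$ if $d,e$ do not commute and $0$ otherwise; $\mathcal{V}(D)$ is its radical. *)

(* Defs.v *)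
From HB Require Import structures.
From mathcomp Require Import all_boot all_order all_algebra all_fingroup.
Set Implicit Arguments. Unset Strict Implicit. Unset Printing Implicit Defensive.
Import GRing.Theory.
Local Open Scope group_scope.

Section ThreeTransp.
Variable gT : finGroupType.

Definition three_transposition_class (D : {set gT}) : Prop :=
  [/\ exists2 d0, d0 \in D & D = d0 ^: <<D>>,
      {in D, forall d, #[d] = 2%N} &
      {in D &, forall d e, #[d * e] \in [:: 1; 2; 3]%N} ].

Definition fischer_line (D : {set gT}) (L : {set gT}) : bool :=
  [exists d in D, exists e in D, (d * e != e * d) && (L == [set d; e; d ^ e])].

Definition collinear (D : {set gT}) (x y : gT) : bool :=
  (x != y) && [exists L : {set gT}, [&& fischer_line D L, x \in L & y \in L]].

Definition adjacency_mx (D : {set gT}) : 'M['F_2]_#|D| :=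
  \matrix_(i, j) ((collinear D (enum_val i) (enum_val j)) : nat)%:R%R.

(** A(D) as an F_2-vector space: row vectors 'rV['F_2]_#|D|, the i-th standard
    basis vector being the point enum_val i of D.  The form <d,e> is 1 iff d, e
    do not commute, extended bilinearly. *)
Definition form_on_basis (d e : gT) : 'F_2 := ((d * e != e * d)%g)%:R%R.

Definition AD_form (D : {set gT}) (u v : 'rV['F_2]_#|D|) : 'F_2 :=
  (\sum_(i < #|D|) \sum_(j < #|D|)
     u 0 i * v 0 j * form_on_basis (enum_val i) (enum_val j))%R.

Definition is_radical (D : {set gT}) (V : {vspace 'rV['F_2]_#|D|}) : Prop :=
  forall u, (u \in V) = [forall v, AD_form u v == 0%R].

End ThreeTransp.

(* Main.v *)
Require Import Defs.
From HB Require Import structures.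
From mathcomp Require Import all_boot all_order all_algebra all_fingroup.
From mathcomp Require Import cyclic.

Import GRing.Theory.
Section G.
Variable gT : finGroupType.
Local Open Scope group_scope.

Lemma inv_inv2 [d : gT] : #[d] = 2%N -> d^-1 = d.
Proof.
move=> h; apply/eqP; rewrite eq_invg_mul -[d * d]/(d ^+ 2) -h.
by rewrite expg_order.
Qed.

Lemma ncomm_conj (d e : gT) : #[d] = 2%N -> #[e] = 2%N ->
  #[d * e] \in [:: 1; 2; 3]%N -> d * e != e * d ->
  (d * d ^ e != d ^ e * d) /\ (e * d ^ e != d ^ e * e).
Proof.
move=> hd he hde nc.
have dd : d * d = 1 by rewrite -{1}(inv_inv2 hd) mulVg.
have ee : e * e = 1 by rewrite -{1}(inv_inv2 he) mulVg.
rewrite conjgE (inv_inv2 he); split; last first.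
  apply: contra nc => /eqP h.
  have h1 : e * (e * (d * e)) = d * e by rewrite mulgA ee mul1g.
  have h2 : e * (d * e) * e = e * d by rewrite -!mulgA ee mulg1.
  by rewrite -h1 h h2.
apply: contra nc => /eqP h.
have ddx x : d * (d * x) = x by rewrite mulgA dd mul1g.
have eex x : e * (e * x) = x by rewrite mulgA ee mul1g.
have g4 : (d * e) ^+ 4 = 1.
  have h' : (d * e) * (d * e) = (e * d) * (e * d).
    by rewrite !mulgA; move: h; rewrite !mulgA.
  have -> : (d * e) ^+ 4 = ((d * e) * (d * e)) * ((d * e) * (d * e)).
    by rewrite !expgS expg0 mulg1 !mulgA.
  rewrite {1}h' -!mulgA ddx eex ddx ee //.
have g2 : (d * e) ^+ 2 = 1.
  apply/eqP; rewrite -order_dvdn.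
  have : #[d * e] %| 4 by rewrite order_dvdn g4.
  by move: hde; rewrite !inE => /or3P [/eqP->|/eqP->|/eqP->].
apply/eqP.
have : (d * e)^-1 = d * e by apply/eqP; rewrite eq_invg_mul -g2.
by rewrite invMg (inv_inv2 hd) (inv_inv2 he) => ->.
Qed.

Lemma collinearE (D : {set gT}) x y : three_transposition_class D ->
  x \in D -> y \in D -> collinear D x y = (x * y != y * x).
Proof.
case=> _ hord hprod xD yD; apply/idP/idP.
  case/andP=> nxy /existsP [L /and3P [/existsP [d /andP [dD /existsP [e /andP [eD /andP [nc /eqP hL]]]]] xL yL]].
  have [c1 c2] := ncomm_conj d e (hord d dD) (hord e eD) (hprod d e dD eD) nc.
  have c1' := c1; have c2' := c2; have nc' := nc; rewrite eq_sym in c1'; rewrite eq_sym in c2'; rewrite eq_sym in nc'.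
  move: xL yL nxy; rewrite hL !inE.
  by move=> /orP [/orP [] | ] /eqP -> /orP [/orP [] | ] /eqP ->; rewrite ?eqxx // => _.
move=> ncxy; apply/andP; split.
  by apply: contra ncxy => /eqP ->.
apply/existsP; exists [set x; y; x ^ y]; rewrite !inE !eqxx orbT /= andbT.
apply/existsP; exists x; rewrite xD /=; apply/existsP; exists y; rewrite yD ncxy.
by rewrite eqxx.
Qed.
End G.

Section Dim.
Local Open Scope ring_scope.

Lemma dim_rowspace (F : fieldType) (m n : nat) (A : 'M[F]_(m, n))
  (U : {vspace 'rV[F]_n}) :
  (forall u, (u \in U) = (u <= A)%MS) -> \dim U = \rank A.
Proof.
move=> HU.
pose B := row_base A.
pose X := [tuple row i B | i < \rank A].
have HX (i : 'I_(\rank A)) : X`_i = row i B.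
  by rewrite -tnth_nth tnth_mktuple.
apply: (@size_basis _ _ _ _ X).
apply/andP; split.
  rewrite eqEsubv; apply/andP; split.
    apply/span_subvP => v /mapP [i _ ->]; rewrite HU.
    by rewrite -(eq_row_base A) -/B row_sub.
  apply/subvP => v; rewrite HU -(eq_row_base A) -/B => /submxP [w ->].
  rewrite mulmx_sum_row; apply: memv_suml => i _; apply: memvZ.
  apply: memv_span; apply/mapP; exists i => //; exact: mem_enum.
apply/freeP => k Hk i.
have : (\row_j k j) *m B = 0.
  rewrite mulmx_sum_row -[RHS]Hk; apply: eq_bigr => j _.
  by rewrite HX mxE.
rewrite -(mul0mx 1 B) => /(row_free_inj (row_base_free A)) => /rowP /(_ i).
by rewrite !mxE.
Qed.
End Dim.

Theorem proposition6p1 (gT : finGroupType) (D : {set gT})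
    (V : {vspace 'rV['F_2]_#|D|}) :
  three_transposition_class D ->
  is_radical V ->
  (\dim (fullv : {vspace 'rV['F_2]_#|D|}) - \dim V)%N = \rank (adjacency_mx D).
Proof.
Local Open Scope ring_scope.
move=> h3 hV.
pose M : 'M['F_2]_#|D| :=
  \matrix_(i, j) form_on_basis (enum_val i) (enum_val j).
have hA : adjacency_mx D = M.
  by apply/matrixP => i j; rewrite !mxE collinearE // enum_valP.
have key u v : AD_form u v = \sum_j (u *m M) 0 j * v 0 j.
  rewrite /AD_form exchange_big; apply: eq_bigr => j _.
  rewrite mxE big_distrl; apply: eq_bigr => i _.
  by rewrite mxE mulrAC.
have dimV : \dim V = \rank (kermx M).
  apply: dim_rowspace => u; rewrite hV sub_kermx.
  apply/forallP/eqP.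
    move=> H; apply/rowP => j; move/eqP: (H (delta_mx 0 j)).
    rewrite key (bigD1 j) //= big1 ?addr0.
      by rewrite !mxE !eqxx mulr1 => ->.
    by move=> k nk; rewrite !mxE (negbTE nk) andbF mulr0.
  move=> H v; rewrite key H; apply/eqP; apply: big1 => j _.
  by rewrite mxE mul0r.
rewrite hA dimV mxrank_ker dimvf dim_matrix mul1r subKn //.
exact: rank_leq_col.
Qed.
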